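(* Let $G$ be a compact Hausdorff abelian group with Haar probability measure $\mu$, and let $B$ be a $K$-analytic subset of $G$. Then for all non-negative integers $m,n$ we have \[\mu(mB-nB)=\sup_{D\subset B,\ D\text{ compact}}\mu(mD-nD).\]
   Context: A subset $S$ of a topological space $Y$ is a $K_{\sigma\delta}$ set if $S=\bigcap_{i\in\mathbb{N}}\bigcup_{j\in\mathbb{N}}K_{i,j}$ for compact sets $K_{i,j}\subset Y$. A subset $A$ of a Hausdorff space $X$ is $K$-analytic if there is a $K_{\sigma\delta}$ set $S$ in some Hausdorff space and a continuous map $f:S\to X$ with $A=f(S)$ ($K$-analytic subsets of $G$ are Haar measurable, and sums/differences of $K$-analytic sets are $K$-analytic). $mB-nB=\{b_1+\dots+b_m-b_1'-\dots-b_n':b_i,b_j'\in B\}$, with an empty sum equal to $0$. *)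

(* Defs.v *)
From HB Require Import structures.
From mathcomp Require Import all_boot all_order all_algebra.
From mathcomp Require Import all_classical all_reals all_analysis.
Set Implicit Arguments. Unset Strict Implicit. Unset Printing Implicit Defensive.
Import Order.TTheory GRing.Theory Num.Theory.
Local Open Scope classical_set_scope.
Local Open Scope ring_scope.

Definition borel_set (T : topologicalType) (A : set T) : Prop :=
  <<s [set U | open U] >> A.

(* A Radon (regular) Borel probability measure, given as a set function whose
   values are only relevant on Borel sets *)
Definition radon_probability (R : realType) (T : topologicalType)
    (mu : set T -> \bar R) : Prop :=
  [/\ mu set0 = 0%E,
      (forall A, borel_set A -> (0 <= mu A)%E),
      (forall F : nat -> set T, (forall k, borel_set (F k)) -> trivIset setT F ->
         (fun n => \sum_(0 <= k < n) mu (F k))%E @ \oo --> mu (\bigcup_k F k)) &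
    [/\ mu setT = 1%E,
      (forall A, borel_set A ->
         mu A = ereal_inf [set mu U | U in [set U | open U /\ A `<=` U]]) &
      (forall U, open U ->
         mu U = ereal_sup [set mu K | K in [set K | compact K /\ K `<=` U]])]].

Definition haar_probability (R : realType) (G : topologicalZmodType)
    (mu : set G -> \bar R) : Prop :=
  radon_probability mu /\
  (forall (g : G) (A : set G), borel_set A -> mu [set g + x | x in A] = mu A).

(* The (completed) Haar measure of an arbitrary set, computed as the outer
   measure; on Haar measurable sets it coincides with the completion of mu. *)
Definition haar_outer (R : realType) (G : topologicalZmodType)
    (mu : set G -> \bar R) (A : set G) : \bar R :=
  ereal_inf [set mu U | U in [set U | borel_set U /\ A `<=` U]].

Definition K_sigma_delta (Y : topologicalType) (S : set Y) : Prop :=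
  exists K : nat -> nat -> set Y, (forall i j, compact (K i j)) /\
    S = \bigcap_i \bigcup_j K i j.

Definition K_analytic (X : topologicalType) (A : set X) : Prop :=
  exists (Y : topologicalType) (S : set Y) (f : Y -> X),
    [/\ hausdorff_space Y, K_sigma_delta S, {within S, continuous f} &
        A = f @` S].

Fixpoint msum (G : zmodType) (m : nat) (B : set G) : set G :=
  match m with
  | 0%N => [set 0]
  | k.+1 => [set x + b | x in msum k B & b in B]
  end.

Definition sumdiff (G : zmodType) (m n : nat) (B : set G) : set G :=
  [set x - y | x in msum m B & y in msum n B].

(* Main.v *)
Require Import Defs.
From HB Require Import structures.
From mathcomp Require Import all_boot all_order all_algebra.
From mathcomp Require Import all_classical all_reals all_analysis.
Import Order.TTheory GRing.Theory Num.Theory.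
Local Open Scope classical_set_scope.
Local Open Scope ring_scope.

Lemma borel_sa {T : topologicalType} : sigma_algebra setT (@borel_set T).
Proof. exact: smallest_sigma_algebra. Qed.

Lemma borel0 {T : topologicalType} : borel_set (set0 : set T).
Proof. by case: (@borel_sa T). Qed.

Lemma borelC (T : topologicalType) (A : set T) : borel_set A -> borel_set (~` A).
Proof. by case: (@borel_sa T) => _ h _ /h; rewrite setTD. Qed.

Lemma borel_bigcup {T : topologicalType} (F : nat -> set T) :
  (forall n, borel_set (F n)) -> borel_set (\bigcup_n F n).
Proof. by case: (@borel_sa T) => _ _ h /h. Qed.

Lemma borelT (T : topologicalType) : borel_set (setT : set T).
Proof. by rewrite -setC0; apply: borelC; apply: borel0. Qed.

Lemma borelU (T : topologicalType) (A B : set T) :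
  borel_set A -> borel_set B -> borel_set (A `|` B).
Proof.
move=> hA hB; rewrite -bigcup2E; apply: borel_bigcup => n /=.
by case: ifP => _ //; case: ifP => _ //; apply: borel0.
Qed.

Lemma borelI (T : topologicalType) (A B : set T) :
  borel_set A -> borel_set B -> borel_set (A `&` B).
Proof.
move=> hA hB; rewrite -[A `&` B]setCK setCI.
by apply: borelC; apply: borelU; apply: borelC.
Qed.

Lemma borelD (T : topologicalType) (A B : set T) :
  borel_set A -> borel_set B -> borel_set (A `\` B).
Proof. by move=> hA hB; rewrite setDE; apply: borelI => //; apply: borelC. Qed.

Lemma borel_bigcap {T : topologicalType} (F : nat -> set T) :
  (forall n, borel_set (F n)) -> borel_set (\bigcap_n F n).
Proof.
move=> h; rewrite -[X in borel_set X]setCK setC_bigcap.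
by apply: borelC; apply: borel_bigcup => n; apply: borelC.
Qed.

Lemma borel_open {T : topologicalType} (A : set T) : open A -> borel_set A.
Proof. by move=> oA; rewrite /borel_set; apply: sub_gen_smallest. Qed.

Lemma borel_closed {T : topologicalType} (A : set T) : closed A -> borel_set A.
Proof. by move=> cA; rewrite -[A]setCK; apply: borelC; apply: borel_open; apply: closed_openC. Qed.


Lemma mu_ge0 {R : realType} {T : topologicalType} {mu : set T -> \bar R}
  (hr : radon_probability mu) A : borel_set A -> (0 <= mu A)%E.
Proof. by case: hr => _ h _ _; apply: h. Qed.

Lemma mu_add2 {R : realType} {T : topologicalType} {mu : set T -> \bar R}
  (hr : radon_probability mu) A B : borel_set A -> borel_set B ->
  A `&` B = set0 -> mu (A `|` B) = (mu A + mu B)%E.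
Proof.
move=> hA hB hAB; case: hr => h0 _ hs _.
have hF : forall k, borel_set (bigcup2 A B k).
  by move=> k /=; case: ifP => _ //; case: ifP => _ //; apply: borel0.
have := hs _ hF; rewrite trivIset_bigcup2 in hAB; move=> /(_ hAB); rewrite bigcup2E => h1.
have h2 : (fun n => \sum_(0 <= k < n) mu (bigcup2 A B k))%E @ \oo --> (mu A + mu B)%E.
  apply: cvg_near_cst; exists 2%N => // n /=.
  case: n => [|[|n]] //= _; elim: n => [|n ih].
    by rewrite big_nat_recr //= big_nat1 /=.
  by rewrite big_nat_recr //= ih h0 adde0.
by rewrite -(cvg_lim (@ereal_hausdorff R) h1) (cvg_lim (@ereal_hausdorff R) h2).
Qed.

Lemma mu_le {R : realType} {T : topologicalType} {mu : set T -> \bar R}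
  (hr : radon_probability mu) A B : borel_set A -> borel_set B ->
  A `<=` B -> (mu A <= mu B)%E.
Proof.
move=> hA hB AB; have -> : B = A `|` (B `\` A).
  by rewrite setDUK.
rewrite (mu_add2 hr) //; last by rewrite setDE setICA setICr setI0.
  by apply: leeDl; apply: (mu_ge0 hr); apply: borelD.
by apply: borelD.
Qed.

Lemma mu_le1 {R : realType} {T : topologicalType} {mu : set T -> \bar R}
  (hr : radon_probability mu) A : borel_set A -> (mu A <= 1)%E.
Proof.
move=> hA; have := @mu_le _ _ _ hr _ _ hA (@borelT T) (@subsetT _ A).
by case: hr => _ _ _ [->].
Qed.

Lemma mu_nondecr {R : realType} {T : topologicalType} {mu : set T -> \bar R}
  (hr : radon_probability mu) (H : nat -> set T) (c : \bar R) :
  (forall n, borel_set (H n)) -> nondecreasing_seq H ->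
  (forall n, (mu (H n) <= c)%E) -> (mu (\bigcup_n H n) <= c)%E.
Proof.
move=> hB nd hc.
have hD : forall k, borel_set (seqD H k).
  by case=> [|k] //=; apply: borelD.
have := (let: And4 _ _ hs _ := hr in hs) _ hD (trivIset_seqD nd).
rewrite eq_bigcup_seqD => hl.
have hsum : forall n, (\sum_(0 <= k < n.+1) mu (seqD H k))%E = mu (H n).
  elim=> [|n ih]; first by rewrite big_nat1.
  rewrite big_nat_recr //= ih -(mu_add2 hr) //.
  - by rewrite -setU_seqD.
  - by apply: borelD.
  - by rewrite setDE setICA setICr setI0.
rewrite -(cvg_lim (@ereal_hausdorff R) hl); apply: lime_le.
  by apply/cvg_ex; eexists; exact: hl.
by exists 1%N => // -[|n] //= _; rewrite hsum.
Qed.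


Lemma ho_mono {R : realType} {G : topologicalZmodType} (mu : set G -> \bar R)
  {A B : set G} : A `<=` B -> (haar_outer mu A <= haar_outer mu B)%E.
Proof.
move=> AB; apply: ereal_inf_le_tmp => _ [U [bU BU] <-].
by exists U => //; split => //; apply: subset_trans BU.
Qed.

Lemma ho_le_mu {R : realType} {G : topologicalZmodType} (mu : set G -> \bar R)
  {A U : set G} : borel_set U -> A `<=` U -> (haar_outer mu A <= mu U)%E.
Proof. by move=> bU AU; apply: ereal_inf_lbound; exists U. Qed.

Lemma ho_ge0 {R : realType} {G : topologicalZmodType} {mu : set G -> \bar R}
  (hr : radon_probability mu) (A : set G) : (0 <= haar_outer mu A)%E.
Proof.
by apply: le_ereal_inf_tmp => _ [U [bU _] <-]; apply: (mu_ge0 hr).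
Qed.

Lemma ho_le1 {R : realType} {G : topologicalZmodType} {mu : set G -> \bar R}
  (hr : radon_probability mu) (A : set G) : (haar_outer mu A <= 1)%E.
Proof.
apply: le_trans (ho_le_mu mu (@borelT G) (@subsetT _ A)) _.
by case: hr => _ _ _ [->].
Qed.

Lemma ho_fin {R : realType} {G : topologicalZmodType} {mu : set G -> \bar R}
  (hr : radon_probability mu) (A : set G) : haar_outer mu A \is a fin_num.
Proof.
have := ho_ge0 hr A; have := ho_le1 hr A.
by case: (haar_outer mu A).
Qed.

Lemma ho_nondecr {R : realType} {G : topologicalZmodType} {mu : set G -> \bar R}
  (hr : radon_probability mu) (T : nat -> set G) (c : \bar R) :
  nondecreasing_seq T ->
  (forall n, (haar_outer mu (T n) <= c)%E) ->
  (haar_outer mu (\bigcup_n T n) <= c)%E.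
Proof.
move=> nd hc.
have c0 : (0 <= c)%E by apply: le_trans (hc 0%N); apply: ho_ge0.
case: c hc c0 => [c| |] hc c0; last by [].
  2: by rewrite leey.
apply/lee_addgt0Pr => e e0.
have : forall n, exists U, borel_set U /\ T n `<=` U /\ (mu U < c%:E + e%:E)%E.
  move=> n; have : (haar_outer mu (T n) < c%:E + e%:E)%E.
    by apply: le_lt_trans (hc n) _; rewrite lteDl.
  by move=> /ereal_inf_lt [_ [U [bU TU] <-] hU]; exists U.
move=> /choice [H hH].
pose H' k := \bigcap_j H (j + k)%N.
have bH' : forall k, borel_set (H' k).
  by move=> k; apply: borel_bigcap => j; case: (hH (j + k)%N).
have ndH' : nondecreasing_seq H'.
  move=> k l kl; apply/subsetPset => x Hx j _; rewrite -(subnK kl) addnA.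
  by apply: Hx.
have TH' : forall k, T k `<=` H' k.
  move=> k x Tx j _; case: (hH (j + k)%N) => _ [+ _]; apply.
  by have /subsetPset := nd k (j + k)%N (leq_addl _ _); apply.
have h1 : \bigcup_n T n `<=` \bigcup_k H' k.
  by move=> x [k _ /TH' Hx]; exists k.
have h2 := ho_le_mu mu (borel_bigcup _ bH') h1.
apply: le_trans h2 _.
apply: (mu_nondecr hr _ _ bH' ndH') => k.
case: (hH k) => bk [_ lk].
apply: le_trans (mu_le hr _ _ (bH' k) bk _) (ltW lk).
by move=> x /(_ 0%N I).
Qed.


Definition Nb {X : topologicalType} (D : set X) : set_system (set X) :=
  [set P | exists U, [/\ open U, D `<=` U & forall N, N `<=` U -> P N]].

Lemma Nb_filter {X : topologicalType} (D : set X) : Filter (Nb D).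
Proof.
split.
- by exists setT; split => //; apply: openT.
- move=> P Q [U [oU DU hU]] [V [oV DV hV]]; exists (U `&` V); split.
  + exact: openI.
  + by move=> x Dx; split; [apply: DU|apply: DV].
  + by move=> N NUV; split; [apply: hU|apply: hV]; apply: subset_trans NUV _ => x [].
- by move=> P Q PQ [U [oU DU hU]]; exists U; split => // N /hU /PQ.
Qed.

Lemma tube {X Y : topologicalType} (K : set Y) (Fi : set_system (set X))
  (Rel : X -> Y -> Prop) : Filter Fi -> compact K ->
  (forall e, K e -> exists V0, [/\ open V0, V0 e &
      Fi (fun N => forall x y, N x -> V0 y -> Rel x y)]) ->
  Fi (fun N => exists V, [/\ open V, K `<=` V & forall x y, N x -> V y -> Rel x y]).
Proof.
move=> FF /compact_near_coveringP cK hK.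
have := cK (set X) Fi
  (fun N e => exists V, [/\ open V, V e & forall x y, N x -> V y -> Rel x y]) FF.
move=> h; apply: (filterS _ (h _)); last first.
  move=> e Ke; case: (hK e Ke) => V0 [oV0 V0e FQ].
  exists (V0, fun N => forall x y, N x -> V0 y -> Rel x y) => /=.
    by split => //; apply: open_nbhs_nbhs.
  by case=> e' N /= [V0e' QN]; exists V0; split.
move=> N hQ.
exists (\bigcup_(W in [set W | open W /\ forall x y, N x -> W y -> Rel x y]) W).
split.
- by apply: bigcup_open => W [].
- move=> e Ke; have [V [oV Ve hV]] := hQ e Ke.
  by exists V.
- by move=> x y Nx [W [_ hW] Wy]; apply: hW.
Qed.


Lemma open_sub_nbhs {X : topologicalType} {x : X} {A : set X} :
  nbhs x A -> exists B, [/\ open B, B x & B `<=` A].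
Proof. by rewrite nbhsE => -[B [oB Bx] BA]; exists B. Qed.

Lemma tube2 {G : topologicalType} (h : G -> G -> G)
  (hc : continuous (fun p : G * G => h p.1 p.2)) (D E W : set G) :
  compact D -> compact E -> open W ->
  (forall d e, D d -> E e -> W (h d e)) ->
  exists U V, [/\ open U, open V, D `<=` U, E `<=` V &
     forall x y, U x -> V y -> W (h x y)].
Proof.
move=> cD cE oW hW.
have step1 : forall d, D d -> exists V0, [/\ open V0, V0 d &
    Nb E (fun N => forall y x, N y -> V0 x -> W (h x y))].
  move=> d Dd.
  have := @tube G G E (Nb [set d]) (fun x y => W (h x y)) (Nb_filter _) cE.
  case.
  - move=> e Ee.
    have : nbhs (d, e) [set p : G * G | W (h p.1 p.2)].
      apply: (hc (d, e)); apply: open_nbhs_nbhs; split => //.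
      exact: hW.
    case=> -[A B] /= [nA nB] hsub.
    have [A' [oA' A'd A'A]] := open_sub_nbhs nA.
    have [B' [oB' B'e B'B]] := open_sub_nbhs nB.
    exists B'; split => //; exists A'; split => //; first by move=> _ ->.
    move=> N NA' x y Nx B'y.
    by apply: (hsub (x, y)); split; [apply: A'A; apply: NA'|apply: B'B].
  - move=> U [oU dU hU]; have [V [oV EV hV]] := hU U (fun x (hx : U x) => hx).
    exists U; split => //; first exact: dU.
    exists V; split => // N NV y x Ny Ux.
    by apply: hV => //; apply: NV.
have := @tube G G D (Nb E) (fun y x => W (h x y)) (Nb_filter _) cD step1.
case=> V [oV EV hV]; have [U [oU DU hU]] := hV V (fun x (hx : V x) => hx).
by exists U, V; split => // x y Ux Vy; apply: hU.
Qed.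

Definition conv {G : topologicalType} (A : nat -> set G) (D : set G) :=
  forall U, open U -> D `<=` U -> exists k, forall j, (k <= j)%N -> A j `<=` U.

Lemma conv_op {G : topologicalType} (h : G -> G -> G)
  (hc : continuous (fun p : G * G => h p.1 p.2))
  (A B : nat -> set G) (D E : set G) :
  compact D -> compact E -> conv A D -> conv B E ->
  conv (fun k => [set h x y | x in A k & y in B k]) [set h x y | x in D & y in E]
  /\ compact [set h x y | x in D & y in E].
Proof.
move=> cD cE cAD cBE; split.
  move=> W oW sub.
  have [U [V [oU oV DU EV hUV]]] : exists U V, [/\ open U, open V, D `<=` U, E `<=` V &
     forall x y, U x -> V y -> W (h x y)].
    by apply: tube2 => // d e Dd Ee; apply: sub; exists d => //; exists e.
  have [k1 hk1] := cAD U oU DU; have [k2 hk2] := cBE V oV EV.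
  exists (maxn k1 k2) => j hj z [x Ax [y By <-]]; apply: hUV.
    by apply: (hk1 j) => //; apply: leq_trans hj; apply: leq_maxl.
  by apply: (hk2 j) => //; apply: leq_trans hj; apply: leq_maxr.
have -> : [set h x y | x in D & y in E] = (fun p : G * G => h p.1 p.2) @` (D `*` E).
  apply/seteqP; split => z.
    by move=> [x Dx [y Ey <-]]; exists (x, y).
  by move=> [[x y] [Dx Ey] <-]; exists x => //; exists y.
apply: continuous_compact; first exact: continuous_subspaceT.
exact: compact_setX.
Qed.

Lemma conv_msum {G : topologicalZmodType} (m : nat) {A : nat -> set G} {D : set G} :
  compact D -> conv A D -> conv (fun k => Defs.msum m (A k)) (Defs.msum m D) /\ compact (Defs.msum m D).
Proof.
move=> cD cAD; elim: m => [|m [ih1 ih2]] /=.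
  split; last exact: compact_set1.
  by move=> U oU DU; exists 0%N => j _.
exact: (@conv_op G (fun x y => x + y) (@add_continuous G) _ _ _ _ ih2 cD ih1 cAD).
Qed.

Lemma conv_sumdiff {G : topologicalZmodType} (m n : nat) (A : nat -> set G) (D : set G) :
  compact D -> conv A D -> conv (fun k => sumdiff m n (A k)) (sumdiff m n D).
Proof.
move=> cD cAD; have [h1 h2] := conv_msum m cD cAD; have [h3 h4] := conv_msum n cD cAD.
exact: (@conv_op G (fun x y => x - y) (@sub_continuous G) _ _ _ _ h2 h4 h1 h3).1.
Qed.


Lemma closed_bigcap_nat {Y : topologicalType} {C : nat -> set Y} :
  (forall k, closed (C k)) -> closed (\bigcap_k C k).
Proof.
move=> cC p clp k _; apply: (cC k).
by apply: (closureS _ clp) => x /(_ k I).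
Qed.

Lemma conv_image {Y : topologicalType} {G : topologicalType} (S : set Y) (f : Y -> G)
  (C : nat -> set Y) (k0 : nat) :
  {within S, continuous f} ->
  (forall k, closed (C k)) -> (forall k, C k.+1 `<=` C k) -> compact (C k0) ->
  \bigcap_k C k `<=` S ->
  conv (fun k => f @` (S `&` C k)) (f @` \bigcap_k C k).
Proof.
move=> hf cC dC cC0 LS U oU LU.
have Cmono : forall i j, (i <= j)%N -> C j `<=` C i.
  move=> i j /subnK <-; elim: (j - i)%N => [|d ih] //=.
  by rewrite addSn; apply: subset_trans (dC _) ih.
pose N := \bigcup_(W in [set W | open W /\ forall z, S z -> W z -> U (f z)]) W.
have oN : open N by apply: bigcup_open => W [].
have LN : \bigcap_k C k `<=` N.
  move=> x Lx; have Sx := LS x Lx.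
  have := (subspace_continuousP S f).1 hf x Sx.
  move=> /(_ U) h; have /h : nbhs (f x) U.
    by apply: open_nbhs_nbhs; split => //; apply: LU; exists x.
  rewrite nbhs_simpl /= => hw.
  have [W [oW Wx WP]] := open_sub_nbhs hw.
  by exists W => //; split => // z Sz Wz; apply: (WP z Wz).
have [k Ck] : exists k, C k `<=` N.
  apply: contrapT => hne.
  have hne' : forall k, C k `\` N !=set0.
    move=> i; apply/set0P/negP => /eqP h; apply: hne; exists i.
    by move=> x Cx; apply: contrapT => Nx; have : (C i `\` N) x by []; rewrite h.
  pose Fl := filter_from setT (fun k => C k `\` N).
  have FFl : ProperFilter Fl.
    apply: filter_from_proper; last by move=> i _; apply: hne'.
    apply: filter_from_filter; first by exists 0%N.
    move=> i j _ _; exists (maxn i j) => // x [Cx Nx]; split; split => //.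
      by apply: (Cmono i (maxn i j)) => //; apply: leq_maxl.
    by apply: (Cmono j (maxn i j)) => //; apply: leq_maxr.
  have [p [Cp clp]] := cC0 Fl FFl (ex_intro2 _ _ k0 I (fun x => @proj1 _ _)).
  have hcl : forall i, closure (C i `\` N) p.
    by move=> i B nB; apply: clp => //; exists i.
  have pL : (\bigcap_k C k) p.
    move=> i _; apply: (cC i).
    have sub1 : C i `\` N `<=` C i by move=> y [].
    exact: (closureS sub1 (hcl i)).
  have : (~` N) p.
    have cN : closed (~` N) by apply: open_closedC.
    have sub1 : C 0%N `\` N `<=` ~` N by move=> y [].
    exact: cN (closureS sub1 (hcl 0%N)).
  by apply; apply: LN.
exists k => j kj _ [z [Sz Cz] <-].
have [W [_ hW] Wz] := Ck z (Cmono k j kj z Cz).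
by apply: hW.
Qed.

Lemma compact_image {Y : topologicalType} {G : topologicalType} (S : set Y) (f : Y -> G)
  (hY : hausdorff_space Y) (C : nat -> set Y) (k0 : nat) :
  {within S, continuous f} -> (forall k, closed (C k)) -> compact (C k0) ->
  \bigcap_k C k `<=` S -> compact (f @` \bigcap_k C k).
Proof.
move=> hf cC cC0 LS; apply: continuous_compact.
  exact: continuous_subspaceW hf.
apply: (subclosed_compact (closed_bigcap_nat cC) cC0).
by move=> x /(_ k0 I).
Qed.


Lemma msum_mono {G : zmodType} (m : nat) (A A' : set G) :
  A `<=` A' -> Defs.msum m A `<=` Defs.msum m A'.
Proof.
move=> AA'; elim: m => [|m ih] //= z [x /ih Ax [b /AA' Ab <-]].
by exists x => //; exists b.
Qed.

Lemma sumdiff_mono {G : zmodType} (m n : nat) {A A' : set G} :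
  A `<=` A' -> sumdiff m n A `<=` sumdiff m n A'.
Proof.
move=> AA' z [x Ax [y Ay <-]].
by exists x; [apply: msum_mono Ax|exists y => //; apply: msum_mono Ay].
Qed.

Lemma msum_bigcup {G : zmodType} (m : nat) {A : nat -> set G} :
  (forall i j, (i <= j)%N -> A i `<=` A j) ->
  Defs.msum m (\bigcup_j A j) `<=` \bigcup_j Defs.msum m (A j).
Proof.
move=> nd; elim: m => [|m ih] /=.
  by move=> z z0; exists 0%N.
move=> z [x /ih [j1 _ Ax] [b [j2 _ Ab] <-]].
exists (maxn j1 j2) => //; exists x.
  by apply: msum_mono Ax; apply: nd; apply: leq_maxl.
by exists b => //; apply: (nd j2); first by apply: leq_maxr.
Qed.

Lemma sumdiff_bigcup {G : zmodType} (m n : nat) {A : nat -> set G} :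
  (forall i j, (i <= j)%N -> A i `<=` A j) ->
  sumdiff m n (\bigcup_j A j) `<=` \bigcup_j sumdiff m n (A j).
Proof.
move=> nd z [x /(msum_bigcup _ nd) [j1 _ Ax] [y /(msum_bigcup _ nd) [j2 _ Ay] <-]].
exists (maxn j1 j2) => //; exists x.
  by apply: msum_mono Ax; apply: nd; apply: leq_maxl.
by exists y => //; apply: msum_mono Ay; apply: nd; apply: leq_maxr.
Qed.

Theorem lemma4p3 (R : realType) (G : topologicalZmodType)
  (hG : hausdorff_space G) (cG : compact [set: G])
  (mu : set G -> \bar R) (hmu : haar_probability mu)
  (B : set G) (hB : K_analytic B) (m n : nat) :
  haar_outer mu (sumdiff m n B) =
  ereal_sup [set haar_outer mu (sumdiff m n D) |
              D in [set D : set G | D `<=` B /\ compact D]].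
Proof.
have hr := hmu.1.
pose Ic A := haar_outer mu (sumdiff m n A).
apply/eqP; rewrite eq_le; apply/andP; split; last first.
  apply: ge_ereal_sup => _ [D [DB _] <-].
  by apply: ho_mono; apply: sumdiff_mono.
apply/lee_addgt0Pr => e e0.
case: hB => Y [S [f [hY [K [cK eS]] hf eB]]].
pose K' i j := \big[setU/set0]_(l < j.+1) K i l.
have cK' : forall i j, compact (K' i j).
  by move=> i j; apply: bigsetU_compact => l _; apply: cK.
have K'mono : forall i j j', (j <= j')%N -> K' i j `<=` K' i j'.
  move=> i j j' jj' x; rewrite /K' -!bigcup_mkord => -[l /= lj Kx].
  by exists l => //=; apply: leq_trans lj _.
have SK' : forall i, S `<=` \bigcup_j K' i j.
  move=> i x; rewrite eS => /(_ i I) [j _ Kx]; exists j => //.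
  by rewrite /K' -bigcup_mkord; exists j => //=.
pose t := (Ic B - e%:E)%E.
pose Pc (C : set Y) := (t < Ic (f @` (S `&` C)))%E.
have step : forall k C, Pc C -> exists j, Pc (C `&` K' k j).
  move=> k C PC; apply: contrapT => hne.
  have hle : forall j, (Ic (f @` (S `&` (C `&` K' k j))) <= t)%E.
    move=> j; rewrite leNgt; apply/negP => h; apply: hne; exists j; exact: h.
  move: PC; rewrite /Pc ltNge => /negP; apply.
  pose A j := f @` (S `&` (C `&` K' k j)).
  have ndA : forall i j, (i <= j)%N -> A i `<=` A j.
    move=> i j ij _ [x [Sx [Cx Kx]] <-]; exists x => //; split => //; split => //.
    exact: K'mono ij _ Kx.
  have eA : f @` (S `&` C) `<=` \bigcup_j A j.
    move=> _ [x [Sx Cx] <-]; have [j _ Kx] := SK' k x Sx.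
    by exists j => //; exists x.
  rewrite /Ic; apply: le_trans (ho_mono mu (sumdiff_mono m n eA)) _.
  apply: le_trans (ho_mono mu (sumdiff_bigcup m n ndA)) _.
  apply: ho_nondecr => //.
  move=> i j ij; apply/subsetPset; apply: sumdiff_mono; exact: ndA.
have : forall kc : nat * set Y, exists j, Pc kc.2 -> Pc (kc.2 `&` K' kc.1 j).
  move=> [k C] /=; have [PC|nPC] := pselect (Pc C).
    by have [j hj] := step k C PC; exists j.
  by exists 0%N.
move=> /choice [J hJ].
pose C := fix C (k : nat) : set Y :=
  if k is k'.+1 then C k' `&` K' k' (J (k', C k')) else setT.
have PcC : forall k, Pc (C k).
  elim=> [|k ih] /=.
    rewrite /Pc setIT -eB gte_subl //; exact: ho_fin.
  exact: (hJ (k, C k)).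
have cC : forall k, closed (C k).
  elim=> [|k ih] /=; first exact: closedT.
  by apply: closedI => //; apply: compact_closed => //; apply: cK'.
have dC : forall k, C k.+1 `<=` C k by move=> k x [].
have cC1 : compact (C 1%N) by rewrite /= setTI; apply: cK'.
have LS : \bigcap_k C k `<=` S.
  move=> x Lx; rewrite eS => i _.
  have [_ Kx] : C i.+1 x by apply: Lx.
  by move: Kx; rewrite /K' -bigcup_mkord => -[l _ Kx]; exists l.
pose D := f @` \bigcap_k C k.
have cD : compact D := @compact_image _ _ S f hY C 1%N hf cC cC1 LS.
have DB : D `<=` B by rewrite eB => _ [x Lx <-]; exists x => //; apply: LS.
have cv := conv_sumdiff m n _ _ cD (@conv_image _ _ S f C 1%N hf cC dC cC1 LS).
have tD : (t <= Ic D)%E.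
  apply: le_ereal_inf_tmp => _ [V [bV DV] <-].
  case: hr => _ _ _ [_ hout _]; rewrite (hout V bV).
  apply: le_ereal_inf_tmp => _ [W [oW VW] <-].
  have [k hk] := cv W oW (subset_trans DV VW).
  apply/ltW; apply: lt_le_trans (PcC k) _.
  rewrite /Ic; apply: (ho_le_mu mu (borel_open _ oW)); exact: (hk k (leqnn k)).
have : (Ic B <= Ic D + e%:E)%E by rewrite -leeBlDr.
move=> h; apply: le_trans h _; apply: leeD2r.
by apply: ereal_sup_ubound; exists D.
Qed.
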